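(* Let $\gamma>0$, $n\in\mathbb{N}^*$, $\lambda_n=\lambda_{n,\gamma}$, $v_n$ the positive $L^2(-1,1)$-normalized first eigenfunction of $A_{n,\gamma}$, and $x_n=\big(\lambda_n/(n\pi)^2\big)^{1/(2\gamma)}$, assumed to satisfy $x_n\le1$. Then $|v_n'(x_n)|\le\sqrt{x_n}\,\lambda_n$.
   Context: $A_{n,\gamma}\varphi=-\varphi''+(n\pi)^2|x|^{2\gamma}\varphi$ with domain $H^2(-1,1)\cap H^1_0(-1,1)$; $\lambda_{n,\gamma}$ is its smallest eigenvalue and $v_n>0$ solves $-v_n''+[(n\pi)^2|x|^{2\gamma}-\lambda_n]v_n=0$ on $(-1,1)$, $v_n(\pm1)=0$, $\|v_n\|_{L^2(-1,1)}=1$. *)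

(* Defs.v *)
From Stdlib Require Import Reals Lra.
Open Scope R_scope.

(* |x|^a for a > 0, with the convention 0^a = 0 (Stdlib's Rpower 0 a = 1). *)
Definition abs_pow (x a : R) : R :=
  if Rle_dec (Rabs x) 0 then 0 else Rpower (Rabs x) a.

Definition pot (n : nat) (gamma x : R) : R :=
  (INR n * PI) ^ 2 * abs_pow x (2 * gamma).

Definition dirichlet_solution (n : nat) (gamma lam : R)
  (phi phi1 phi2 : R -> R) : Prop :=
  (forall x, derivable_pt_lim phi x (phi1 x)) /\
  (forall x, derivable_pt_lim phi1 x (phi2 x)) /\
  phi (-1) = 0 /\ phi 1 = 0 /\
  (forall x, -1 < x < 1 -> - phi2 x + pot n gamma x * phi x = lam * phi x).

Definition is_eigenvalue (n : nat) (gamma lam : R) : Prop :=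
  exists phi phi1 phi2 : R -> R,
    dirichlet_solution n gamma lam phi phi1 phi2 /\
    exists x, -1 < x < 1 /\ phi x <> 0.

Definition is_smallest_eigenvalue (n : nat) (gamma lam : R) : Prop :=
  is_eigenvalue n gamma lam /\
  forall mu, is_eigenvalue n gamma mu -> lam <= mu.

(* Main.v *)
Require Import Defs.
From Stdlib Require Import Reals Lra Lia.
From Coquelicot Require Import Coquelicot.
Open Scope R_scope.

Lemma cont_of_der (f f1 : R -> R) : (forall x, derivable_pt_lim f x (f1 x)) ->
  forall x, continuous f x.
Proof. intros H x. apply continuity_pt_filterlim. apply derivable_continuous_pt. exists (f1 x). apply H. Qed.

Lemma sq_der (f f1 : R -> R) : (forall x, derivable_pt_lim f x (f1 x)) ->
  forall x, derivable_pt_lim (fun y => f y ^ 2) x (INR 2 * f x ^ (2-1) * f1 x).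
Proof.
  intros H x.
  apply (derivable_pt_lim_comp f (fun y => y ^ 2)). apply H. apply derivable_pt_lim_pow.
Qed.

Lemma der_neg (f f1 : R -> R) c : derivable_pt_lim f (-c) (f1 (-c)) ->
  derivable_pt_lim (fun x => f (- x)) c (- f1 (-c)).
Proof.
  intros H. replace (- f1 (-c)) with (f1 (-c) * (-1)) by ring.
  apply (derivable_pt_lim_comp (fun x => - x) f).
  replace (-1) with (- (1)) by ring. apply derivable_pt_lim_opp. apply derivable_pt_lim_id.
  apply H.
Qed.

Lemma pot_ge0 n g x : 0 <= pot n g x.
Proof.
  unfold pot, abs_pow. destruct (Rle_dec (Rabs x) 0).
  - nra.
  - apply Rmult_le_pos. apply pow2_ge_0. unfold Rpower. left; apply exp_pos.
Qed.

Lemma pot_even n g x : pot n g (- x) = pot n g x.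
Proof. unfold pot, abs_pow. rewrite Rabs_Ropp. reflexivity. Qed.

Theorem mainTheorem8 (gamma : R) (n : nat) (lam : R) (v v1 v2 : R -> R) :
  0 < gamma ->
  (1 <= n)%nat ->
  is_smallest_eigenvalue n gamma lam ->
  dirichlet_solution n gamma lam v v1 v2 ->
  (forall x, -1 < x < 1 -> 0 < v x) ->
  (exists pr : Riemann_integrable (fun x => (v x) ^ 2) (-1) 1,
      RiemannInt pr = 1) ->
  Rpower (lam / (INR n * PI) ^ 2) (1 / (2 * gamma)) <= 1 ->
  Rabs (v1 (Rpower (lam / (INR n * PI) ^ 2) (1 / (2 * gamma))))
    <= sqrt (Rpower (lam / (INR n * PI) ^ 2) (1 / (2 * gamma))) * lam.
Proof.
  intros Hg Hn _ [Dv [Dv1 [Vm [Vp Eq]]]] Hpos [pr Hpr] Hx1.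
  set (xn := Rpower (lam / (INR n * PI) ^ 2) (1 / (2 * gamma))) in *.
  assert (Hxn : 0 < xn) by (unfold xn, Rpower; apply exp_pos).
  (* v1 0 = 0 via Wronskian *)
  assert (H0 : v1 0 = 0).
  { set (W := fun x => v x * (- v1 (- x)) - v1 x * v (- x)).
    assert (DW : forall c, 0 <= c <= 1 -> derivable_pt_lim W c
        (v1 c * (- v1 (-c)) + v c * v2 (-c) - (v2 c * v (-c) + v1 c * (- v1 (-c))))).
    { intros c _. unfold W.
      apply (derivable_pt_lim_minus (fun x => v x * - v1 (-x)) (fun x => v1 x * v (-x))).
      - apply (derivable_pt_lim_mult v (fun x => - v1 (-x))). apply Dv.
        replace (v2 (-c)) with (- - v2 (-c)) by ring.
        apply (derivable_pt_lim_opp (fun x => v1 (-x))).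
        apply (der_neg v1 v2). apply Dv1.
      - apply (derivable_pt_lim_mult v1 (fun x => v (-x))). apply Dv1.
        apply (der_neg v v1). apply Dv. }
    destruct (MVT_cor2 W _ 0 1 Rlt_0_1 DW) as [c [Hcr Hc]].
    assert (E1 := Eq c ltac:(lra)). assert (E2 := Eq (-c) ltac:(lra)).
    rewrite pot_even in E2.
    assert (Hd : v1 c * - v1 (- c) + v c * v2 (- c) - (v2 c * v (- c) + v1 c * - v1 (- c)) = 0).
    { assert (Ha : v2 c = (pot n gamma c - lam) * v c) by lra.
      assert (Hb : v2 (-c) = (pot n gamma c - lam) * v (-c)) by lra. rewrite Ha, Hb. ring. }
    cbv beta in Hcr. rewrite Hd in Hcr. unfold W in Hcr. rewrite Vp in Hcr.
    replace (-1) with (-(1)) in Vm by ring. rewrite Vm in Hcr.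
    replace (-0) with 0 in Hcr by ring.
    assert (0 < v 0) by (apply Hpos; lra). nra. }
  assert (Hlam : 0 < lam).
  { destruct (Rle_or_lt lam 0) as [Hl|Hl]; [exfalso|exact Hl].
    assert (Hv1 : forall x, 0 < x <= 1 -> 0 <= v1 x).
    { intros x Hx. destruct (MVT_cor2 v1 v2 0 x ltac:(lra) (fun c _ => Dv1 c)) as [c [Hcr Hc]].
      assert (E := Eq c ltac:(lra)). assert (0 < v c) by (apply Hpos; lra).
      assert (0 <= pot n gamma c) by apply pot_ge0.
      assert (0 <= v2 c) by nra. nra. }
    destruct (MVT_cor2 v v1 (1/2) 1 ltac:(lra) (fun c _ => Dv c)) as [c [Hcr Hc]].
    assert (0 <= v1 c) by (apply Hv1; lra). assert (0 < v (1/2)) by (apply Hpos; lra). nra. }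
  assert (Hnpi : 0 < INR n * PI).
  { apply Rmult_lt_0_compat. apply lt_0_INR. lia. apply PI_RGT_0. }
  assert (Hq : forall x, 0 < x < xn -> pot n gamma x <= lam).
  { intros x Hx. unfold pot, abs_pow. rewrite Rabs_pos_eq by lra.
    destruct (Rle_dec x 0). lra.
    assert (Rpower x (2*gamma) <= Rpower xn (2*gamma)) by (apply Rle_Rpower_l; lra).
    assert (Hpw : Rpower xn (2*gamma) = lam / (INR n * PI)^2).
    { unfold xn. rewrite Rpower_mult. replace (1 / (2*gamma) * (2*gamma)) with 1 by (field; lra).
      apply Rpower_1. apply Rdiv_lt_0_compat; nra. }
    rewrite Hpw in H. 
    assert (0 < (INR n * PI)^2) by nra.
    apply (Rmult_le_compat_l ((INR n * PI)^2)) in H; [|lra].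
    replace ((INR n * PI) ^ 2 * (lam / (INR n * PI) ^ 2)) with lam in H by (field; split; [apply PI_neq0|apply not_0_INR; lia]). lra. }
  assert (Hneg : v1 xn <= 0).
  { destruct (MVT_cor2 v1 v2 0 xn Hxn (fun c _ => Dv1 c)) as [c [Hcr Hc]].
    assert (E := Eq c ltac:(lra)). assert (0 < v c) by (apply Hpos; lra).
    assert (pot n gamma c <= lam) by (apply Hq; lra).
    assert (v2 c <= 0) by nra. rewrite H0 in Hcr. nra. }
  assert (Cv := cont_of_der v v1 Dv).
  assert (Cv2 := cont_of_der _ _ (sq_der v v1 Dv)).
  assert (Ev : forall a b, ex_RInt v a b) by (intros; apply (ex_RInt_continuous (V:=R_CompleteNormedModule)); intros; apply Cv).
  assert (Ev2 : forall a b, ex_RInt (fun y => v y ^ 2) a b)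
    by (intros; apply (ex_RInt_continuous (V:=R_CompleteNormedModule)); intros; apply Cv2).
  set (G := fun x => RInt v 0 x).
  assert (DG : forall x, derivable_pt_lim G x (v x)).
  { intros x. apply is_derive_Reals. apply (is_derive_RInt (V:=R_CompleteNormedModule) v G 0 x).
    apply filter_forall. intros b. apply (RInt_correct (V:=R_CompleteNormedModule)). apply Ev. apply Cv. }
  assert (HF : - v1 xn <= lam * G xn).
  { assert (D : forall c, 0 <= c <= xn -> derivable_pt_lim (fun x => - v1 x - lam * G x) c
        (- v2 c - lam * v c)).
    { intros c _. apply derivable_pt_lim_minus. apply derivable_pt_lim_opp. apply Dv1.
      apply derivable_pt_lim_scal. apply DG. }
    destruct (MVT_cor2 _ _ 0 xn Hxn D) as [c [Hcr Hc]].
    assert (E := Eq c ltac:(lra)). assert (0 < v c) by (apply Hpos; lra).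
    assert (0 <= pot n gamma c) by apply pot_ge0.
    assert (HG0 : G 0 = 0) by (unfold G; apply (RInt_point (V:=R_CompleteNormedModule))).
    rewrite HG0, H0 in Hcr. assert (- v2 c - lam * v c <= 0) by nra. nra. }
  assert (HI : RInt (fun y => v y ^ 2) 0 xn <= 1).
  { rewrite <- Hpr, <- RInt_Reals.
    rewrite <- (RInt_Chasles _ (-1) 0 1) by auto.
    rewrite <- (RInt_Chasles _ 0 xn 1) by auto.
    assert (0 <= RInt (fun y => v y ^ 2) (-1) 0)
      by (apply RInt_ge_0; auto; lra || (intros; apply pow2_ge_0)).
    assert (0 <= RInt (fun y => v y ^ 2) xn 1)
      by (apply RInt_ge_0; auto; intros; apply pow2_ge_0).
    unfold plus; simpl in *. lra. }
  set (s := sqrt xn).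
  assert (Hs : 0 < s) by (apply sqrt_lt_R0; lra).
  assert (Hss : s * s = xn) by (apply sqrt_sqrt; lra).
  assert (HG : G xn <= s).
  { unfold G.
    assert (Heq : RInt (fun y => s/2 * v y^2 + 1/(2*s)) 0 xn
       = s/2 * RInt (fun y => v y^2) 0 xn + (xn - 0) * (1/(2*s))).
    { apply is_RInt_unique.
      apply (is_RInt_plus (V:=R_NormedModule) (fun y => s/2 * v y ^2) (fun _ => 1/(2*s))).
      apply (is_RInt_scal (V:=R_NormedModule) (fun y => v y ^2)).
      apply (RInt_correct (V:=R_CompleteNormedModule)). apply Ev2.
      apply (is_RInt_const (V:=R_NormedModule)). }
    assert (Hex : ex_RInt (fun y => s/2 * v y^2 + 1/(2*s)) 0 xn).
    { eexists. apply (is_RInt_plus (V:=R_NormedModule) (fun y => s/2 * v y ^2) (fun _ => 1/(2*s))).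
      apply (is_RInt_scal (V:=R_NormedModule) (fun y => v y ^2)).
      apply (RInt_correct (V:=R_CompleteNormedModule)). apply Ev2.
      apply (is_RInt_const (V:=R_NormedModule)). }
    assert (H : RInt v 0 xn <= RInt (fun y => (s / 2) * (v y ^ 2) + 1 / (2 * s)) 0 xn).
    { apply RInt_le; auto. lra.
      intros x _. assert (0 <= (s * v x - 1)^2) by apply pow2_ge_0.
      apply (Rmult_le_reg_l (2 * s)). lra.
      replace (2 * s * (s / 2 * v x ^ 2 + 1 / (2 * s))) with (s*s * v x ^2 + 1) by (field; lra).
      nra. }
    rewrite Heq in H.
    assert (s / 2 * RInt (fun y => v y ^ 2) 0 xn <= s / 2) by (apply (Rmult_le_compat_l (s/2)) in HI; lra).
    replace ((xn - 0) * (1 / (2 * s))) with (s / 2) in H by (rewrite <- Hss; field; lra).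
    lra. }
  rewrite Rabs_left1 by lra. fold s. nra.
Qed.
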